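(* Let $S$ be an additively reduced semidomain and $G$ a torsion-free abelian group. Let $f=\sum_{i=0}^\infty s_ix^{g_i}\in S[\![G]\!]$ with $s_i\neq0$ for all $i\in\mathbb{N}_0$. If for some $N\in\mathbb{N}_0$ the sequence $(g_{N+i+1}-g_{N+i})_{i\in\mathbb{N}_0}$ is strictly increasing and unbounded above in $G$, then $f$ is monolithic.
   Context: A semidomain is a subsemiring (containing $0$ and $1$) of an integral domain. $S$ is additively reduced if $0$ is the only invertible element of $(S,+)$. $G$ carries a fixed total order compatible with addition. $S[\![G]\!]=\{\sum_{i=0}^\infty s_ix^{g_i} : s_i\in S,\ g_i\in G,\ g_i<g_{i+1}\}$ with operations defined as for polynomials. A nonzero $f$ is monolithic if $f=pq$ with $p,q\in S[\![G]\!]$ implies one of $p,q$ is a monomial $sx^g$. *)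

(* Defs.v *)
From mathcomp Require Import all_boot all_order all_algebra.
Set Implicit Arguments. Unset Strict Implicit. Unset Printing Implicit Defensive.
Import GRing.Theory.
Local Open Scope ring_scope.

Definition semidomain_pred (R : idomainType) (S : pred R) : Prop :=
  [/\ 0 \in S, 1 \in S,
      (forall x y, x \in S -> y \in S -> x + y \in S) &
      (forall x y, x \in S -> y \in S -> x * y \in S)].

Definition additively_reduced (R : idomainType) (S : pred R) : Prop :=
  forall x y, x \in S -> y \in S -> x + y = 0 -> x = 0.

Definition torsion_free (G : zmodType) : Prop :=
  forall (x : G) (n : nat), (0 < n)%N -> x *+ n = 0 -> x = 0.

Definition ordered_group (G : zmodType) (lt : rel G) : Prop :=
  [/\ (forall x, ~~ lt x x),
      (forall x y z, lt x y -> lt y z -> lt x z),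
      (forall x y, x != y -> lt x y || lt y x) &
      (forall x y z, lt x y -> lt (x + z) (y + z))].

(* An element sum_i s_i x^{g_i} of S[[G]] is given by a pair of sequences
   (s, g) with s_i in S and g strictly increasing. *)
Definition is_series (R : idomainType) (S : pred R) (G : zmodType) (lt : rel G)
    (s : nat -> R) (g : nat -> G) : Prop :=
  (forall i, s i \in S) /\ (forall i, lt (g i) (g i.+1)).

Definition coef_rel (R : idomainType) (G : zmodType)
    (s : nat -> R) (g : nat -> G) (h : G) (c : R) : Prop :=
  (exists i, g i = h /\ s i = c) \/ ((forall i, g i <> h) /\ c = 0).

(* c is the coefficient of x^h in the product (sum_i p_i x^{a_i})(sum_j q_j x^{b_j}),
   i.e. the (finite) sum of p_i q_j over the pairs (i,j) with a_i + b_j = h. *)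
Definition prod_coef_rel (R : idomainType) (G : zmodType)
    (p : nat -> R) (a : nat -> G) (q : nat -> R) (b : nat -> G) (h : G) (c : R) : Prop :=
  exists l : seq (nat * nat),
    [/\ uniq l,
        (forall i j, (i, j) \in l <-> a i + b j = h) &
        c = \sum_(ij <- l) p ij.1 * q ij.2].

Definition series_mul_eq (R : idomainType) (G : zmodType)
    (s : nat -> R) (g : nat -> G)
    (p : nat -> R) (a : nat -> G) (q : nat -> R) (b : nat -> G) : Prop :=
  forall h, exists c, coef_rel s g h c /\ prod_coef_rel p a q b h c.

Definition is_monomial (R : idomainType) (S : pred R) (G : zmodType)
    (p : nat -> R) (a : nat -> G) : Prop :=
  exists (s0 : R) (g0 : G), s0 \in S /\
    forall h, coef_rel p a h (if h == g0 then s0 else 0).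

Definition monolithic (R : idomainType) (S : pred R) (G : zmodType) (lt : rel G)
    (s : nat -> R) (g : nat -> G) : Prop :=
  (exists i, s i != 0) /\
  forall p a q b, is_series S lt p a -> is_series S lt q b ->
    series_mul_eq s g p a q b -> is_monomial S p a \/ is_monomial S q b.

(* Main.v *)
Require Import Defs.
From mathcomp Require Import all_boot all_order all_algebra.
From mathcomp Require Import zify.
From Stdlib Require Import Classical.
Set Implicit Arguments. Unset Strict Implicit.
Import GRing.Theory.
Local Open Scope ring_scope.

Section Ord.
Variables (G : zmodType) (lt : rel G).
Hypothesis og : ordered_group lt.

Lemma ltxx : forall x, ~~ lt x x. Proof. by case: og. Qed.
Lemma ltT : forall x y z, lt x y -> lt y z -> lt x z. Proof. by case: og. Qed.
Lemma ltD : forall x y z, lt x y -> lt (x + z) (y + z). Proof. by case: og. Qed.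

Definition le x y := x = y \/ lt x y.

Lemma ltDl x y z : lt x y -> lt (z + x) (z + y).
Proof. by move=> h; rewrite ![z + _]addrC; apply: ltD. Qed.

Lemma ltD' x y z : lt x y -> lt (x + z) (y + z).
Proof. exact: ltD. Qed.

Lemma leD x y z : le x y -> le (x + z) (y + z).
Proof. by case=> [->|h]; [left|right; apply: ltD]. Qed.
Lemma leDl x y z : le x y -> le (z + x) (z + y).
Proof. by case=> [->|h]; [left|right; apply: ltDl]. Qed.
Lemma le_lt_trans x y z : le x y -> lt y z -> lt x z.
Proof. case=> [->//|h]; exact: ltT. Qed.
Lemma lt_le_trans x y z : lt x y -> le y z -> lt x z.
Proof. move=> h [<-//|]; exact: ltT. Qed.
Lemma le_trans x y z : le x y -> le y z -> le x z.
Proof. case=> [->//|h] h2; right; exact: lt_le_trans h h2. Qed.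
Lemma lt_nle x y : lt x y -> le y x -> False.
Proof. move=> h1 h2; have := lt_le_trans h1 h2; by rewrite (negbTE (ltxx x)). Qed.

Definition incr (f : nat -> G) := forall i, lt (f i) (f i.+1).

Lemma incr_lt f : incr f -> forall m n, (m < n)%N -> lt (f m) (f n).
Proof.
move=> hf m n; elim: n => [//|n IH].
rewrite ltnS leq_eqVlt => /orP[/eqP->|/IH h]; first exact: hf.
exact: ltT h (hf n).
Qed.

Lemma incr_le f : incr f -> forall m n, (m <= n)%N -> le (f m) (f n).
Proof.
move=> hf m n; rewrite leq_eqVlt => /orP[/eqP->|h]; [by left|right; exact: incr_lt].
Qed.

Lemma incr_rev f : incr f -> forall m n, lt (f m) (f n) -> (m < n)%N.
Proof.
move=> hf m n h; rewrite ltnNge; apply/negP => hle.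
exact: lt_nle h (incr_le hf hle).
Qed.

Lemma key (g a b : nat -> G) (P Q : nat -> Prop) : incr g -> incr b ->
  forall K0 i1 i2, (forall k, (K0 <= k)%N -> lt (a i2 - a i1) (g k.+1 - g k)) ->
  (forall i j, P i -> Q j -> exists k, a i + b j = g k) ->
  P i1 -> P i2 -> lt (a i1) (a i2) ->
  (forall K, exists j, (K <= j)%N /\ Q j) -> False.
Proof.
move=> hg hb K0 i1 i2 hgap hcov P1 P2 lt12 Qinf.
have claim : forall n, exists j k, [/\ Q j, a i1 + b j = g k & (n <= k)%N].
  elim=> [|n [j [k [Qj ejk lenk]]]].
    have [j [_ Qj]] := Qinf 0%N. have [k ek] := hcov _ _ P1 Qj. by exists j, k.
  have [j' [ljj' Qj']] := Qinf j.+1.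
  have [k' ek'] := hcov _ _ P1 Qj'.
  exists j', k'; split => //.
  have : lt (g k) (g k') by rewrite -ejk -ek'; apply: ltDl; exact: incr_lt hb _ _ ljj'.
  move/(incr_rev hg) => h; exact: leq_ltn_trans lenk h.
have [j [k [Qj ek lek]]] := claim K0.
have [k' ek'] := hcov _ _ P2 Qj.
have hkk' : lt (g k) (g k') by rewrite -ek -ek'; apply: ltD.
have /(incr_le hg) hle : (k.+1 <= k')%N by exact: incr_rev hg _ _ hkk'.
have := ltD (g k) (hgap k lek).
have -> : g k.+1 - g k + g k = g k.+1 by rewrite subrK.
have -> : a i2 - a i1 + g k = g k' by rewrite -ek' -ek addrA subrK.
move=> h; exact: lt_nle h hle.
Qed.

End Ord.

Lemma sum_S0 (R : idomainType) (S : pred R) : semidomain_pred S -> additively_reduced S ->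
  forall (l : seq (nat * nat)) (F : nat * nat -> R), (forall x, F x \in S) ->
  \sum_(x <- l) F x = 0 -> forall x, x \in l -> F x = 0.
Proof.
move=> [S0 S1 SD SM] AR; elim=> [|y l IH] F FS //.
have Ssum : \sum_(x <- l) F x \in S.
  elim: l {IH} => [|z l IHl]; first by rewrite big_nil.
  by rewrite big_cons; apply: SD.
rewrite big_cons => hs.
have y0 := AR _ _ (FS y) Ssum hs.
move: hs; rewrite y0 add0r => hs x.
rewrite in_cons => /orP[/eqP->//|xl]; exact: IH.
Qed.

Lemma nonmono2 (R : idomainType) (S : pred R) (G : zmodType) (p : nat -> R) (a : nat -> G) :
  semidomain_pred S -> ~ is_monomial S p a -> (forall i, p i \in S) ->
  exists i1 i2, [/\ i1 != i2, p i1 != 0 & p i2 != 0].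
Proof.
move=> [S0 _ _ _] nm pS; apply: NNPP => hne; apply: nm.
case: (classic (exists i0, p i0 != 0)) => [[i0 pi0]|nex].
  exists (p i0), (a i0); split => // h.
  have pz : forall i, i != i0 -> p i = 0.
    move=> i ne; apply/eqP; apply: contraT => pin; exfalso; apply: hne; by exists i, i0.
  case: (eqVneq h (a i0)) => [->|hne0]; first by left; exists i0.
  case: (classic (exists i, a i = h)) => [[i ai]|nex].
    left; exists i; split => //; apply: pz.
    by apply/eqP => e; move: hne0; rewrite -ai e eqxx.
  by right; split => // i ai; apply: nex; exists i.
exists 0, 0; split => // h; rewrite if_same.
have pz : forall i, p i = 0.
  move=> i; apply/eqP; apply: contraT => pin; exfalso; apply: nex; by exists i.
case: (classic (exists i, a i = h)) => [[i ai]|nex2].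
  by left; exists i; split => //; rewrite pz.
by right; split => // i ai; apply: nex2; exists i.
Qed.

Theorem lemma4p3 (R : idomainType) (S : pred R) (G : zmodType) (lt : rel G)
    (s : nat -> R) (g : nat -> G) :
  semidomain_pred S -> additively_reduced S ->
  torsion_free G -> ordered_group lt ->
  is_series S lt s g ->
  (forall i, s i != 0) ->
  (exists N : nat,
     (forall i, lt (g (N + i)%N.+1 - g (N + i)%N) (g (N + i.+1)%N.+1 - g (N + i.+1)%N)) /\
     (forall u : G, exists i, lt u (g (N + i)%N.+1 - g (N + i)%N))) ->
  monolithic S lt s g.
Proof.
move=> SD AR _ og [sS gI] snz [N [gapI gapU]].
split; first by exists 0%N.
move=> p a q b [pS aI] [qS bI] hmul.
have cov1 : forall i j, p i != 0 -> q j != 0 -> exists k, a i + b j = g k.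
  move=> i j pi qj; have [c [hc [l [ul hl ec]]]] := hmul (a i + b j).
  have cn0 : c != 0.
    apply/eqP=> c0.
    have := @sum_S0 R S SD AR l (fun ij => p ij.1 * q ij.2) _ _ (i, j).
    move=> /(_ _ _ _)/eqP H; move: (mulf_neq0 pi qj); rewrite H //.
    - by move=> x; case: SD => _ _ _ SM; apply: SM.
    - by rewrite -ec.
    - by apply/hl.
  case: hc => [[k [gk _]]|[_ c0]]; [by exists k | by rewrite c0 eqxx in cn0].
have cov2 : forall k, exists i j, [/\ p i != 0, q j != 0 & a i + b j = g k].
  move=> k; have [c [hc [l [ul hl ec]]]] := hmul (g k).
  have cn0 : c != 0.
    case: hc => [[i [_ <-]] // | [hn _]]; by case: (hn k).
  apply: NNPP => hne; move/eqP: cn0; apply; rewrite ec; apply: big1_seq.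
  move=> [i j] /andP[_ /hl hij] /=.
  apply/eqP; apply: contraT => hpq; exfalso; apply: hne; exists i, j.
  by move: hpq; rewrite mulf_eq0 negb_or => /andP[].
have gU : forall u, exists k, lt u (g k).
  move=> u; have [i hi] := gapU (u - g N); exists (N + i).+1.
  have h1 := ltD' og (g (N + i)) hi; rewrite subrK in h1.
  have h2 : le lt u (u - g N + g (N + i)).
    have := leDl og (u - g N) (incr_le og gI (leq_addr i N)).
    by rewrite subrK.
  exact: (le_lt_trans og h2 h1).
have gap_ev : forall d, exists K0, forall k, (K0 <= k)%N -> lt d (g k.+1 - g k).
  move=> d; have [i0 hi0] := gapU d; exists (N + i0)%N => k hk.
  have e : k = (N + (k - N))%N by lia.
  rewrite e.
  have ginc : incr lt (fun i => g (N + i).+1 - g (N + i)) := gapI.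
  have hle := incr_le og ginc (m := i0) (n := (k - N)%N) ltac:(lia).
  exact: (lt_le_trans og hi0 hle).
have two : forall (x : nat -> R) (c : nat -> G), incr lt c ->
    (exists i1 i2, [/\ i1 != i2, x i1 != 0 & x i2 != 0]) ->
    exists i1 i2, [/\ lt (c i1) (c i2), x i1 != 0 & x i2 != 0].
  move=> x c hc [i1 [i2 [ne x1 x2]]]; case: (ltngtP i1 i2) => h.
  - by exists i1, i2; split => //; exact: (incr_lt og hc h).
  - by exists i2, i1; split => //; exact: (incr_lt og hc h).
  - by rewrite h eqxx in ne.
apply: NNPP => hn.
have hp : ~ is_monomial S p a by move=> h; apply: hn; left.
have hq : ~ is_monomial S q b by move=> h; apply: hn; right.
have [i1 [i2 [lt12 p1 p2]]] := two _ _ aI (nonmono2 SD hp pS).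
have [j1 [j2 [lt12' q1 q2]]] := two _ _ bI (nonmono2 SD hq qS).
case: (classic (forall K, exists j, (K <= j)%N /\ q j != 0)) => [qinf|qfin].
  have [K0 hK0] := gap_ev (a i2 - a i1).
  exact: (@key G lt og g a b (fun i => p i != 0) (fun j => q j != 0) gI bI K0 i1 i2 hK0 cov1 p1 p2 lt12 qinf).
case: (classic (forall K, exists i, (K <= i)%N /\ p i != 0)) => [pinf|pfin].
  have [K0 hK0] := gap_ev (b j2 - b j1).
  have cov1' : forall j i, q j != 0 -> p i != 0 -> exists k, b j + a i = g k.
    by move=> j i qj pi; rewrite addrC; apply: cov1.
  exact: (@key G lt og g b a (fun j => q j != 0) (fun i => p i != 0) gI aI K0 j1 j2 hK0 cov1' q1 q2 lt12' pinf).
have [Kp hKp] := not_all_ex_not _ _ pfin.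
have [Kq hKq] := not_all_ex_not _ _ qfin.
have [k hk] := gU (a Kp + b Kq).
have [i [j [pi qj e]]] := cov2 k.
have iK : (i < Kp)%N.
  rewrite ltnNge; apply/negP => h; apply: hKp; by exists i.
have jK : (j < Kq)%N.
  rewrite ltnNge; apply/negP => h; apply: hKq; by exists j.
have hle : le lt (g k) (a Kp + b Kq).
  rewrite -e; apply: (le_trans og (leD og (b j) (incr_le og aI (ltnW iK)))).
  exact: (leDl og _ (incr_le og bI (ltnW jK))).
exact: (lt_nle og hk hle).
Qed.
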